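(* Let $d$ and $K\ge 2$ be integers with $d\ge K$, and let $\hat{\mathbf{W}}_{\rm ETF}=[\hat{\mathbf{w}}_1,\dots,\hat{\mathbf{w}}_K]\in\mathbb{R}^{d\times K}$ be a simplex equiangular tight frame, i.e. $\hat{\mathbf{W}}_{\rm ETF}=\sqrt{\frac{K}{K-1}}\,\mathbf{U}\left(\mathbf{I}_K-\frac{1}{K}\mathbf{1}_K\mathbf{1}_K^T\right)$ for some $\mathbf{U}\in\mathbb{R}^{d\times K}$ with $\mathbf{U}^T\mathbf{U}=\mathbf{I}_K$ (so that $\hat{\mathbf{w}}_{k}^T\hat{\mathbf{w}}_{k'}=\frac{K}{K-1}\delta_{k,k'}-\frac{1}{K-1}$ for all $k,k'\in[1,K]$). Consider $T+1$ sessions $t=0,1,\dots,T$. The label space $\{1,\dots,K\}$ is partitioned into pairwise disjoint nonempty sets $\mathcal{C}^{(0)},\dots,\mathcal{C}^{(T)}$, where session $t$ contains the $K^{(t)}=|\mathcal{C}^{(t)}|$ classes of $\mathcal{C}^{(t)}$, so $K=\sum_{t=0}^T K^{(t)}$. Each class $k$ has $n_k\ge 1$ samples (the $n_k$ may be arbitrary and the $K^{(t)}$ may differ across sessions), and session $t$ has $N^{(t)}=\sum_{k\in\mathcal{C}^{(t)}} n_k$ samples. For each session $t$ consider the problem $$\min_{\mathbf{M}^{(t)}}\ \frac{1}{N^{(t)}}\sum_{k\in\mathcal{C}^{(t)}}\sum_{i=1}^{n_k}\mathcal{L}\left(\mathbf{m}^{(t)}_{k,i},\hat{\mathbf{W}}_{\rm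 ETF}\right)\quad\text{s.t.}\quad \|\mathbf{m}^{(t)}_{k,i}\|^2\le 1\ \ \forall k\in\mathcal{C}^{(t)},\ 1\le i\le n_k,$$ where $\mathbf{m}^{(t)}_{k,i}\in\mathbb{R}^d$ is a free feature variable for the $i$-th sample of class $k$ in session $t$, $\mathbf{M}^{(t)}\in\mathbb{R}^{d\times N^{(t)}}$ is the collection of these variables, and $\hat{\mathbf{W}}_{\rm ETF}$ is held fixed. The loss $\mathcal{L}$ for a feature $\mathbf{m}$ of class $k$ is either the cross-entropy loss $\mathcal{L}(\mathbf{m},\hat{\mathbf{W}}_{\rm ETF})=-\log\frac{\exp(\hat{\mathbf{w}}_k^T\mathbf{m})}{\sum_{j=1}^K\exp(\hat{\mathbf{w}}_j^T\mathbf{m})}$ or the dot-regression loss $\mathcal{L}(\mathbf{m},\hat{\mathbf{W}}_{\rm ETF})=\frac{1}{2}\left(\hat{\mathbf{w}}_k^T\mathbf{m}-1\right)^2$. Let $\hat{\mathbf{M}}^{(t)}$ denote the global minimizer of this problem for session $t$, obtained by optimizing incrementally for $t=0,1,\dots,T$, and let $\hat{\mathbf{M}}=[\hat{\mathbf{M}}^{(0)},\dots,\hat{\mathbf{M}}^{(T)}]\in\mathbb{R}^{d\times\sum_{t=0}^T N^{(t)}}$. Then, for either choice of loss, every column $\hat{\mathbf{m}}_{k,i}$ of $\hat{\mathbf{M}}$ with class label $k$ satisfies $$\|\hat{\mathbf{m}}_{k,i}\|=1,\qquad \hat{\mathbf{m}}_{k,i}^T\hat{\mathbf{w}}_{k'}=\frac{K}{K-1}\delta_{k,k'}-\frac{1}{K-1}\quad\forall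 k,k'\in[1,K],\ 1\le i\le n_k,$$ where $\delta_{k,k'}=1$ if $k=k'$ and $0$ otherwise.
   Context: This is a simplified (''unconstrained features'') model of few-shot class-incremental learning: the backbone network is dropped and the last-layer features are treated as independent optimization variables, while the classifier is a fixed simplex ETF covering the whole label space of all sessions. $\mathbf{I}_K$ is the $K\times K$ identity matrix and $\mathbf{1}_K$ the all-ones vector in $\mathbb{R}^K$. *)

(* Defs.v *)
From HB Require Import structures.
From mathcomp Require Import all_boot all_order all_algebra.
From mathcomp Require Import all_classical all_reals all_analysis.
Set Implicit Arguments. Unset Strict Implicit. Unset Printing Implicit Defensive.
Import Order.TTheory GRing.Theory Num.Theory.
Local Open Scope ring_scope.

Definition dotv (R : realType) (d : nat) (u v : 'cV[R]_d) : R :=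
  \sum_(i < d) u i ord0 * v i ord0.
Definition vnorm (R : realType) (d : nat) (u : 'cV[R]_d) : R :=
  Num.sqrt (dotv u u).

Definition simplex_ETF (R : realType) (d K : nat) (U : 'M[R]_(d, K)) : 'M[R]_(d, K) :=
  Num.sqrt (K%:R / (K%:R - 1)) *:
    (U *m (1%:M - K%:R^-1 *: const_mx 1)).

Inductive loss_kind := CrossEntropy | DotRegression.

Definition loss (R : realType) (d K : nat) (lk : loss_kind) (W : 'M[R]_(d, K))
    (k : 'I_K) (m : 'cV[R]_d) : R :=
  match lk with
  | CrossEntropy =>
      - ln (expR (dotv (col k W) m) / \sum_(j < K) expR (dotv (col j W) m))
  | DotRegression => 2^-1 * (dotv (col k W) m - 1) ^+ 2
  end.

(* Session t problem: features M k i for the classes k with sess k = t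
   (values for classes of other sessions are irrelevant). *)
Definition feat_type (R : realType) (d K : nat) (n : 'I_K -> nat) :=
  forall k : 'I_K, 'I_(n k) -> 'cV[R]_d.

Definition session_N (K T : nat) (sess : 'I_K -> 'I_T.+1) (n : 'I_K -> nat)
    (t : 'I_T.+1) : nat :=
  \sum_(k < K | sess k == t) n k.

Definition session_obj (R : realType) (d K T : nat) (lk : loss_kind)
    (W : 'M[R]_(d, K)) (sess : 'I_K -> 'I_T.+1) (n : 'I_K -> nat)
    (t : 'I_T.+1) (M : feat_type R d n) : R :=
  (session_N sess n t)%:R^-1 *
    \sum_(k < K | sess k == t) \sum_(i < n k) loss lk W k (M k i).

Definition session_feasible (R : realType) (d K T : nat)
    (sess : 'I_K -> 'I_T.+1) (n : 'I_K -> nat) (t : 'I_T.+1)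
    (M : feat_type R d n) : Prop :=
  forall k : 'I_K, sess k = t -> forall i : 'I_(n k), vnorm (M k i) ^+ 2 <= 1.

Definition session_global_min (R : realType) (d K T : nat) (lk : loss_kind)
    (W : 'M[R]_(d, K)) (sess : 'I_K -> 'I_T.+1) (n : 'I_K -> nat)
    (t : 'I_T.+1) (M : feat_type R d n) : Prop :=
  session_feasible sess t M /\
  forall M' : feat_type R d n, session_feasible sess t M' ->
    session_obj lk W sess t M <= session_obj lk W sess t M'.

(* Main.v *)
Require Import Defs.
From HB Require Import structures.
From mathcomp Require Import all_boot all_order all_algebra.
From mathcomp Require Import all_classical all_reals all_analysis.
From mathcomp Require Import ring lra.
Import Order.TTheory GRing.Theory Num.Theory.
Local Open Scope ring_scope.

Lemma Jmul (R : realType) (m K p : nat) :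
  (const_mx 1 : 'M[R]_(m, K)) *m (const_mx 1 : 'M[R]_(K, p)) = K%:R *: const_mx 1.
Proof.
apply/matrixP => i j; rewrite !mxE.
under eq_bigr do rewrite !mxE mulr1.
by rewrite sumr_const card_ord mulr1.
Qed.

Lemma Pidem (R : realType) (K : nat) : (0 < K)%N ->
  let P := (1%:M - K%:R^-1 *: const_mx 1 : 'M[R]_K) in P *m P = P.
Proof.
move=> K0 P; rewrite /P mulmxBl mulmxBr mulmxBr !mul1mx mulmx1.
rewrite -!scalemxAl -!scalemxAr Jmul !scalerA.
have -> : K%:R^-1 / K%:R * K%:R = K%:R^-1 :> R.
  by rewrite divfK // pnatr_eq0 -lt0n.
by rewrite subrr subr0.
Qed.

Lemma Psum (R : realType) (K : nat) : (0 < K)%N ->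
  (1%:M - K%:R^-1 *: const_mx 1 : 'M[R]_K) *m (const_mx 1 : 'M[R]_(K,1)) = 0.
Proof.
move=> K0; rewrite mulmxBl mul1mx -scalemxAl Jmul scalerA mulVf ?scale1r ?subrr //.
by rewrite pnatr_eq0 -lt0n.
Qed.

Lemma gram (R : realType) (d K : nat) (hK : (2 <= K)%N)
    (U : 'M[R]_(d, K)) (hU : U^T *m U = 1%:M) (j j' : 'I_K) :
  dotv (col j (simplex_ETF U)) (col j' (simplex_ETF U)) =
    K%:R / (K%:R - 1) * (j == j')%:R - (K%:R - 1)^-1.
Proof.
have K0 : (0 < K)%N by apply: leq_trans hK.
set W := simplex_ETF U.
have -> : dotv (col j W) (col j' W) = (W^T *m W) j j'.
  by rewrite /dotv !mxE; apply: eq_bigr => i _; rewrite !mxE.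
set c := Num.sqrt (K%:R / (K%:R - 1) : R).
set P := (1%:M - K%:R^-1 *: const_mx 1 : 'M[R]_K).
have PT : P^T = P by rewrite /P linearB /= linearZ /= trmx1 trmx_const.
have -> : W^T *m W = (c * c) *: P.
  rewrite /W /simplex_ETF -/c -/P [(c *: _)^T]linearZ /= trmx_mul PT.
  rewrite -[_ *m (c *: _)]scalemxAr -scalemxAl. rewrite scalerA -mulmxA (mulmxA _ U) hU mul1mx Pidem //.
have K1 : (1 < K%:R :> R) by rewrite ltr1n.
have cc : c * c = K%:R / (K%:R - 1).
  rewrite -expr2 sqr_sqrtr // divr_ge0 // ?subr_ge0 ?ler0n //; lra.
rewrite !mxE cc eq_sym.
have h1 : K%:R - 1 != 0 :> R by rewrite subr_eq0 gt_eqF.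
have h2 : K%:R != 0 :> R by rewrite pnatr_eq0 -lt0n.
field; by rewrite h1 h2.
Qed.

Lemma Wsum (R : realType) (d K : nat) (hK : (2 <= K)%N)
    (U : 'M[R]_(d, K)) (i : 'I_d) : \sum_(j < K) simplex_ETF U i j = 0.
Proof.
have K0 : (0 < K)%N by apply: leq_trans hK.
have : (simplex_ETF U *m (const_mx 1 : 'M[R]_(K,1))) i ord0 = 0.
  by rewrite /simplex_ETF -scalemxAl -mulmxA Psum // mulmx0 scaler0 mxE.
rewrite mxE => H; rewrite -[RHS]H; by apply: eq_bigr => j _; rewrite [const_mx 1 j ord0]mxE mulr1.
Qed.
Lemma ce_core (R : realType) (K : nat) (hK : (2 <= K)%N) (a : 'I_K -> R) (k : 'I_K)
  (hs : \sum_j a j = 0) :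
  let b := fun j : 'I_K => K%:R / (K%:R - 1) * (k == j)%:R - (K%:R - 1)^-1 in
  - ln (expR (a k) / \sum_j expR (a j)) <= - ln (expR (b k) / \sum_j expR (b j)) ->
  1 <= a k.
Proof.
move=> b hle.
have K1 : (1 < K%:R :> R) by rewrite ltr1n.
have Km : 0 < K%:R - 1 :> R by lra.
set q := (K%:R - 1)^-1 : R.
have q0 : 0 < q by rewrite invr_gt0.
have qK : q * (K%:R - 1) = 1 by rewrite mulVf // gt_eqF.
have c1 : \sum_(j | j != k) (1 : R) = K%:R - 1.
  have : \sum_(j < K) (1 : R) = K%:R by rewrite sumr_const card_ord.
  rewrite (bigD1 k) //=; lra.
have bk : b k = 1.
  rewrite /b eqxx mulr1; field; by rewrite gt_eqF.
have bj : forall j, j != k -> b j = - q by move=> j; rewrite /b eq_sym => /negbTE ->; rewrite mulr0 sub0r.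
have Sb : \sum_j expR (b j) = expR 1 + (K%:R - 1) * expR (- q).
  rewrite (bigD1 k) //= bk; congr (_ + _).
  rewrite -c1 mulr_suml; apply: eq_bigr => j hj; by rewrite bj // mul1r.
have sa : \sum_(j | j != k) a j = - a k.
  move: hs; rewrite (bigD1 k) //=; lra.
set mu := - (a k) * q.
have low : (K%:R - 1) * expR mu <= \sum_(j | j != k) expR (a j).
  apply: (@le_trans _ _ (\sum_(j | j != k) expR mu * (1 + (a j - mu)))).
    rewrite -mulr_sumr big_split /= sumrB sa c1.
    have -> : \sum_(j | j != k) mu = mu * (K%:R - 1).
      by rewrite -c1 mulr_sumr; apply: eq_bigr => *; rewrite mulr1.
    rewrite /mu -mulrA mulrC qK; lra.
  apply: ler_sum => j _.
  rewrite -{2}(subrK mu (a j)) expRD mulrC ler_pM2r ?expR_gt0 //.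
  exact: expR_ge1Dx.
rewrite bk Sb lerN2 (bigD1 k) //= in hle.
set T := \sum_(j | j != k) expR (a j) in hle low.
have T0 : 0 <= T by apply: sumr_ge0 => *; exact: expR_ge0.
have E10 := expR_gt0 (1:R); have Ea0 := expR_gt0 (a k).
have Em0 := expR_gt0 mu; have Eq0 := expR_gt0 (- q).
rewrite ler_ln ?posrE in hle; last 2 first.
- by rewrite divr_gt0 // addr_gt0 // mulr_gt0.
- by rewrite divr_gt0 // ltr_wpDr.
rewrite ler_pdivlMr ?ltr_wpDr // mulrAC ler_pdivrMr ?addr_gt0 ?mulr_gt0 // in hle.
have h1 : expR 1 * expR mu <= expR (a k) * expR (- q).
  have h2 : (K%:R - 1) * (expR 1 * expR mu) <= (K%:R - 1) * (expR (a k) * expR (- q)) by nra.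
  by rewrite ler_pM2l in h2.
rewrite -!expRD ler_expR /mu in h1.
nra.
Qed.

Lemma dotvC (R : realType) (d : nat) (u v : 'cV[R]_d) : dotv u v = dotv v u.
Proof. by apply: eq_bigr => i _; rewrite mulrC. Qed.

Lemma dotv_ge0 (R : realType) (d : nat) (u : 'cV[R]_d) : 0 <= dotv u u.
Proof. by apply: sumr_ge0 => i _; rewrite -expr2 sqr_ge0. Qed.

Lemma eq_of_dot (R : realType) (d : nat) (m w : 'cV[R]_d) :
  dotv m m <= 1 -> dotv w w = 1 -> 1 <= dotv w m -> m = w.
Proof.
move=> hm hw hwm.
have E : \sum_(i < d) (m i ord0 - w i ord0) ^+ 2 = dotv m m - 2 * dotv w m + dotv w w.
  rewrite /dotv mulr_sumr -sumrB -big_split; apply: eq_bigr => i _ /=; ring.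
have S0 : \sum_(i < d) (m i ord0 - w i ord0) ^+ 2 = 0.
  apply/eqP; rewrite eq_le sumr_ge0 ?andbT; last by move=> *; exact: sqr_ge0.
  rewrite E; lra.
apply/matrixP => i j; rewrite (ord1 j).
have /psumr_eq0P H := S0.
have := H (fun i _ => sqr_ge0 _) i isT.
by move/eqP; rewrite sqrf_eq0 subr_eq0 => /eqP ->.
Qed.

Theorem theorem1 (R : realType) (d K T : nat) (hK : (2 <= K)%N) (hdK : (K <= d)%N)
    (U : 'M[R]_(d, K)) (hU : U^T *m U = 1%:M)
    (sess : 'I_K -> 'I_T.+1)
    (hsess : forall t : 'I_T.+1, exists k : 'I_K, sess k = t)
    (n : 'I_K -> nat) (hn : forall k, (0 < n k)%N)
    (lk : loss_kind)
    (Mhat : forall t : 'I_T.+1, feat_type R d n)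
    (hMhat : forall t : 'I_T.+1,
        session_global_min lk (simplex_ETF U) sess t (Mhat t)) :
  forall (k : 'I_K) (i : 'I_(n k)),
    let m := Mhat (sess k) k i in
    vnorm m = 1 /\
    forall k' : 'I_K,
      dotv m (col k' (simplex_ETF U)) =
        K%:R / (K%:R - 1) * (k == k')%:R - (K%:R - 1)^-1.
Proof.
move=> k i m.
set W := simplex_ETF U.
have [feas hmin] := hMhat (sess k).
set M := Mhat (sess k) in feas hmin.
have mdef : M k i = m by [].
set w := col k W.
have K1 : (1 < K%:R :> R) by rewrite ltr1n.
have ww : dotv w w = 1.
  rewrite /w gram // eqxx mulr1; field; by rewrite gt_eqF // subr_gt0.
have mm : dotv m m <= 1.
  have := feas k erefl i; rewrite /vnorm sqr_sqrtr //; exact: dotv_ge0.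
pose M' : feat_type R d n := fun k' i' =>
  if (k' == k) && (val i' == val i) then w else M k' i'.
have feas' : session_feasible sess (sess k) M'.
  move=> k' hk' i'; rewrite /M'; case: ifP => _; last exact: feas.
  by rewrite /vnorm sqr_sqrtr ?ww // ; exact: dotv_ge0.
have := hmin M' feas'.
rewrite /session_obj ler_pM2l; last first.
  rewrite invr_gt0 ltr0n /session_N (bigD1 k) //=.
  exact: leq_trans (hn k) (leq_addr _ _).
rewrite (bigD1 k) //= [X in _ <= X](bigD1 k) //=.
rewrite (bigD1 i (F := fun i' => loss lk W k (M k i'))) //=.
rewrite (bigD1 i (F := fun i' => loss lk W k (M' k i'))) //=.
have -> : M' k i = w by rewrite /M' !eqxx.
have -> : \sum_(i' < n k | i' != i) loss lk W k (M' k i') =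
          \sum_(i' < n k | i' != i) loss lk W k (M k i').
  apply: eq_bigr => i' hi'; rewrite /M' eqxx /=.
  by move: hi'; rewrite -(inj_eq val_inj) => /negbTE ->.
have -> : \sum_(k' < K | (sess k' == sess k) && (k' != k))
            \sum_(i' < n k') loss lk W k' (M' k' i') =
          \sum_(k' < K | (sess k' == sess k) && (k' != k))
            \sum_(i' < n k') loss lk W k' (M k' i').
  apply: eq_bigr => k' /andP [_ hk']; apply: eq_bigr => i' _.
  by rewrite /M' (negbTE hk').
rewrite mdef => hl.
have hl' : loss lk W k m <= loss lk W k w by lra.
have a1 : 1 <= dotv w m.
  destruct lk; simpl in hl'.
  - rewrite /w.
    refine (@ce_core R K hK (fun j => dotv (col j W) m) k _ _).
      rewrite /dotv exchange_big /=.
      rewrite (eq_bigr (fun i0 => m i0 ord0 * \sum_(j < K) W i0 j)).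
        by apply: big1 => i0 _; rewrite Wsum // mulr0.
      by move=> i0 _; rewrite mulr_sumr; apply: eq_bigr => j _; rewrite !mxE mulrC.
    have gw : forall j, dotv (col j W) w =
        K%:R / (K%:R - 1) * (k == j)%:R - (K%:R - 1)^-1.
      by move=> j; rewrite /w gram // eq_sym.
    have Sw : \sum_j expR (dotv (col j W) w) =
        \sum_j expR (K%:R / (K%:R - 1) * (k == j)%:R - (K%:R - 1)^-1).
      by apply: eq_bigr => j _; rewrite gw.
    by move: hl'; rewrite Sw gw.
  - move: hl'; rewrite ww subrr expr0n /= mulr0 dotvC => hl'.
    set x := dotv m (col k W) in hl' *.
    have h : (x - 1) ^+ 2 = 0.
      apply/eqP; rewrite eq_le sqr_ge0 andbT; nra.
    by move/eqP: h; rewrite sqrf_eq0 subr_eq0 => /eqP ->.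
have mw : m = w by apply: eq_of_dot.
split.
  by rewrite mw /vnorm ww sqrtr1.
by move=> k'; rewrite mw /w gram.
Qed.
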